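(* Fix a real number $0<\varepsilon<1$. There is a constant $c_0=c_0(\varepsilon)$ such that for every real $c\ge c_0$ there is $n_0$ with the following property: no line in $\mathbb{R}^2$ intersects more than two of the squares $Q_n$, $n\ge n_0$, where $Q_n$ is the closed axis-parallel square with side length $\left\lfloor \frac{2^{n}}{cn^{1+\varepsilon}}\right\rfloor$ whose top left corner is $\left(2^{n},\left\lfloor \frac{2^{n}}{n^{\varepsilon}}\right\rfloor\right)$, i.e. $$Q_n=\left[2^n,\,2^n+\left\lfloor \tfrac{2^{n}}{cn^{1+\varepsilon}}\right\rfloor\right]\times\left[\left\lfloor \tfrac{2^{n}}{n^{\varepsilon}}\right\rfloor-\left\lfloor \tfrac{2^{n}}{cn^{1+\varepsilon}}\right\rfloor,\,\left\lfloor \tfrac{2^{n}}{n^{\varepsilon}}\right\rfloor\right].$$ *)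

(* Defs.v *)
From Stdlib Require Import Reals.
Open Scope R_scope.

(* floor of a real number, as a real: Int_part x = up x - 1 is the greatest
   integer <= x. *)
Definition floorR (x : R) : R := IZR (Int_part x).

Definition side (eps c : R) (n : nat) : R :=
  floorR (2 ^ n / (c * Rpower (INR n) (1 + eps))).

Definition top (eps : R) (n : nat) : R :=
  floorR (2 ^ n / Rpower (INR n) eps).

Definition in_Q (eps c : R) (n : nat) (x y : R) : Prop :=
  2 ^ n <= x <= 2 ^ n + side eps c n /\
  top eps n - side eps c n <= y <= top eps n.

Definition line_meets_Q (a b d eps c : R) (n : nat) : Prop :=
  exists x y : R, a * x + b * y = d /\ in_Q eps c n x y.

(* Main.v *)
Require Import Defs.
From Stdlib Require Import Reals Lra Lia Psatz.
Open Scope R_scope.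

Lemma floorR_spec x : floorR x <= x /\ x - 1 < floorR x.
Proof. unfold floorR. destruct (base_Int_part x). lra. Qed.

Lemma ln_le_sub1 r : 0 < r -> ln r <= r - 1.
Proof. intros. pose proof (exp_ineq1_le (ln r)). rewrite exp_ln in H0; lra. Qed.

Definition GG (eps : R) (n : nat) := / Rpower (INR n) eps.

Lemma GG_exp eps n : GG eps n = exp (- (eps * ln (INR n))).
Proof. unfold GG, Rpower. rewrite exp_Ropp. reflexivity. Qed.

Lemma GG_pos eps n : 0 < GG eps n.
Proof. rewrite GG_exp. apply exp_pos. Qed.

Lemma ln_INR_nonneg n : (1 <= n)%nat -> 0 <= ln (INR n).
Proof. intros. rewrite <- ln_1. destruct (Req_dec (INR n) 1) as [E|E].
 rewrite E; lra. left; apply ln_increasing; try lra. apply le_INR in H. simpl in H. lra. Qed.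

Lemma GG_le1 eps n : 0 <= eps -> (1 <= n)%nat -> GG eps n <= 1.
Proof. intros. rewrite GG_exp. rewrite <- exp_0. 
  pose proof (ln_INR_nonneg n H0).
  destruct (Req_dec (eps * ln (INR n)) 0) as [E|E]. rewrite E, Ropp_0; lra.
  left; apply exp_increasing. assert (0 <= eps * ln (INR n)) by (apply Rmult_le_pos; lra). lra. Qed.

Lemma GG_ge eps n : eps <= 1 -> (1 <= n)%nat -> / INR n <= GG eps n.
Proof. intros. rewrite GG_exp.
  assert (Hn: 0 < INR n) by (apply lt_0_INR; lia).
  rewrite <- (exp_ln (INR n)) at 1 by lra. rewrite <- exp_Ropp.
  pose proof (ln_INR_nonneg n H0).
  destruct (Req_dec (- ln (INR n)) (- (eps * ln (INR n)))) as [E|E]. rewrite E; lra.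
  left; apply exp_increasing.
  assert (eps * ln (INR n) <= ln (INR n)). { 
   replace (ln (INR n)) with (1 * ln (INR n)) at 2 by ring. apply Rmult_le_compat_r; lra. }
  lra. Qed.

Lemma side_le eps c n : 0 < c -> (1 <= n)%nat ->
  side eps c n <= 2 ^ n * (GG eps n / (c * INR n)).
Proof. intros Hc Hn. unfold side. 
  assert (Hn': 0 < INR n) by (apply lt_0_INR; lia).
  replace (2 ^ n * (GG eps n / (c * INR n))) with (2 ^ n / (c * Rpower (INR n) (1 + eps))).
  apply floorR_spec.
  rewrite Rpower_plus, Rpower_1 by lra. unfold GG.
  assert (0 < Rpower (INR n) eps) by (unfold Rpower; apply exp_pos).
  field. repeat split; lra. Qed.

Lemma top_spec eps n : 2 ^ n * GG eps n - 1 < top eps n <= 2 ^ n * GG eps n.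
Proof. unfold top, GG. replace (2 ^ n / Rpower (INR n) eps) with (2 ^ n * / Rpower (INR n) eps) by reflexivity.
  destruct (floorR_spec (2 ^ n * / Rpower (INR n) eps)). lra. Qed.

Lemma sq_bounds eps c n x y : 0 < eps <= 1 -> 1 <= c -> (1 <= n)%nat -> in_Q eps c n x y ->
  0 < x /\ / 2 ^ n * (1 - GG eps n / (c * INR n)) <= / x <= / 2 ^ n /\
  GG eps n - (2 * (GG eps n / (c * INR n)) + / 2 ^ n) <= y / x <= GG eps n.
Proof.
  intros He Hc Hn [[Hx1 Hx2] [Hy1 Hy2]].
  assert (Hn': 1 <= INR n) by (apply le_INR in Hn; simpl in Hn; lra).
  pose proof (side_le eps c n ltac:(lra) Hn) as Hs.
  pose proof (top_spec eps n) as Ht.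
  pose proof (GG_pos eps n). pose proof (GG_le1 eps n ltac:(lra) Hn).
  set (G := GG eps n) in *. set (X := 2 ^ n) in *.
  assert (HX : 0 < X) by (apply pow_lt; lra).
  set (d := G / (c * INR n)).
  assert (Hd0 : 0 <= d) by (unfold d; apply Rlt_le, Rdiv_lt_0_compat; nra).
  assert (Hd1 : d <= G). { unfold d. unfold Rdiv.
    assert (/ (c * INR n) <= 1). { rewrite <- Rinv_1. apply Rinv_le_contravar; nra. }
    assert (0 < / (c * INR n)) by (apply Rinv_0_lt_compat; nra). nra. }
  fold d in Hs.
  assert (Hx : 0 < x) by lra.
  split; [exact Hx|]. split. split. 3: split.
  - apply Rmult_le_reg_l with (X * x). nra.
    field_simplify; try lra. nra.
  - apply Rinv_le_contravar; lra.
  - apply Rmult_le_reg_l with x. lra.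
    replace (x * (y / x)) with y by (field; lra).
    assert (G * x <= G * X + X * d) by nra.
    assert (2 * d * x >= 2 * d * X) by nra.
    assert (x / X >= 1). { apply Rle_ge. apply Rmult_le_reg_l with X. lra. field_simplify; lra. }
    assert (x * (2 * d + / X) = 2 * d * x + x / X) by (field; lra).
    rewrite Rmult_minus_distr_l, H4. nra.
  - apply Rmult_le_reg_l with x. lra.
    replace (x * (y / x)) with y by (field; lra). nra.
Qed.


Lemma exp_le_mono a b : a <= b -> exp a <= exp b.
Proof. intros [H|H]. left; apply exp_increasing; auto. subst; lra. Qed.

Lemma A_bound eps p q : 0 < eps <= 1 -> 0 < p <= q ->
  exp (- (eps * ln p)) - exp (- (eps * ln q)) <=
  eps * exp (- (eps * ln q)) * ((q - p) / p) * (q / p).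
Proof.
  intros He Hp.
  set (L := ln q - ln p).
  assert (HL : L = ln (q / p)). { unfold L, Rdiv. rewrite ln_mult, ln_Rinv; try lra.
    all: try (apply Rinv_0_lt_compat; lra). }
  assert (Hqp : 0 < q / p) by (apply Rdiv_lt_0_compat; lra).
  assert (HL1 : L <= (q - p) / p). { rewrite HL. pose proof (ln_le_sub1 _ Hqp).
    replace ((q - p) / p) with (q / p - 1) by (field; lra). lra. }
  assert (HL0 : 0 <= L). { rewrite HL. rewrite <- ln_1. 
    destruct (Req_dec (q/p) 1) as [E|E]. rewrite E; lra.
    left. apply ln_increasing. lra. assert (1 <= q / p).
    { apply Rmult_le_reg_r with p. lra. unfold Rdiv. rewrite Rmult_assoc, Rinv_l; lra. } lra. }
  set (x := eps * L).
  assert (Hx0 : 0 <= x) by (unfold x; nra).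
  assert (E1 : exp (- (eps * ln p)) = exp (- (eps * ln q)) * exp x).
  { rewrite <- exp_plus. f_equal. unfold x, L. ring. }
  rewrite E1.
  assert (Hex : exp x <= q / p). { rewrite <- (exp_ln (q/p)) by lra. rewrite <- HL.
    apply exp_le_mono. unfold x. nra. }
  assert (Hx1 : exp x - 1 <= x * exp x). { pose proof (exp_ineq1_le (- x)).
    rewrite exp_Ropp in H. pose proof (exp_pos x).
    assert ((1 - x) * exp x <= 1). { replace 1 with (/ exp x * exp x) at 2 by (field; lra).
      apply Rmult_le_compat_r; lra. }
    nra. }
  assert (Hxb : x <= eps * ((q - p) / p)) by (unfold x; nra).
  pose proof (exp_pos (- (eps * ln q))).
  set (g := exp (- (eps * ln q))) in *.
  assert (0 <= (q - p) / p) by (unfold Rdiv; apply Rmult_le_pos; [lra| left; apply Rinv_0_lt_compat; lra]).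
  assert (H2: g * exp x - g = g * (exp x - 1)) by ring.
  rewrite H2.
  assert (g * (exp x - 1) <= g * (x * exp x)) by (apply Rmult_le_compat_l; lra).
  assert (x * exp x <= eps * ((q - p) / p) * (q / p)).
  { apply Rmult_le_compat; try lra. pose proof (exp_pos x); lra. }
  nra.
Qed.

Lemma B_bound eps q m : 0 < eps <= 1 -> 0 < q < m ->
  exp (- (eps * ln q)) * (eps * (m - q) / (m + (m - q))) <=
  exp (- (eps * ln q)) - exp (- (eps * ln m)).
Proof.
  intros He Hq.
  set (L := ln m - ln q).
  assert (HL : L >= 1 - q / m). { unfold L. pose proof (ln_le_sub1 (q / m) ltac:(apply Rdiv_lt_0_compat; lra)).
    unfold Rdiv in H. rewrite ln_mult, ln_Rinv in H; try lra. all: try (apply Rinv_0_lt_compat; lra). }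
  set (y := eps * L).
  assert (Hy0 : eps * ((m - q) / m) <= y). { unfold y. replace ((m - q) / m) with (1 - q / m) by (field; lra). nra. }
  assert (E1 : exp (- (eps * ln m)) = exp (- (eps * ln q)) * exp (- y)).
  { rewrite <- exp_plus. f_equal. unfold y, L. ring. }
  rewrite E1.
  pose proof (exp_pos (- (eps * ln q))).
  set (g := exp (- (eps * ln q))) in *.
  assert (0 < (m - q) / m) by (apply Rdiv_lt_0_compat; lra).
  assert (Hy : 0 < y) by nra.
  assert (Hey : exp (- y) <= / (1 + y)). { rewrite exp_Ropp. apply Rinv_le_contravar. lra. apply exp_ineq1_le. }
  assert (eps * (m - q) / (m + (m - q)) <= 1 - / (1 + y)).
  { replace (1 - / (1 + y)) with (y / (1 + y)) by (field; lra).
    apply Rle_trans with (eps * ((m - q) / m) / (1 + eps * ((m - q) / m))).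
    - replace (eps * ((m - q) / m) / (1 + eps * ((m - q) / m))) with
        (eps * (m - q) * / (m + eps * (m - q))) by (field; nra).
      unfold Rdiv. apply Rmult_le_compat_l. apply Rmult_le_pos; lra. assert (0 <= eps * (m - q)) by (apply Rmult_le_pos; lra). apply Rinv_le_contravar; [lra|]. assert (eps * (m - q) <= 1 * (m - q)) by (apply Rmult_le_compat_r; lra). lra.
    - assert (0 < eps * ((m - q) / m)) by (apply Rmult_lt_0_compat; lra).
      set (y0 := eps * ((m - q) / m)) in *.
      assert (y / (1 + y) - y0 / (1 + y0) = (y - y0) / ((1 + y) * (1 + y0))) by (field; lra).
      assert (0 <= (y - y0) / ((1 + y) * (1 + y0))).
      { unfold Rdiv. apply Rmult_le_pos. lra. left; apply Rinv_0_lt_compat; apply Rmult_lt_0_compat; lra. }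
      lra. }
  assert (g * exp (- y) <= g * / (1 + y)) by (apply Rmult_le_compat_l; lra).
  nra.
Qed.

Lemma step_ineq (j s : R) : 2 <= j -> 100 <= s -> (j + 1) * (s + 1) ^ 2 <= 2 * j * s ^ 2.
Proof. intros. assert (0 <= (j - 2) * (s ^ 2 - 2 * s - 1)) by (apply Rmult_le_pos; nra). nra. Qed.

Lemma key_j (j : nat) (p : R) : (1 <= j)%nat -> 100 <= p ->
  INR j * (p + INR j) ^ 2 <= 3 / 2 * (2 ^ j - 1) * p ^ 2.
Proof.
  intros Hj Hp.
  destruct j as [|j]; [lia|].
  destruct j as [|j]. { simpl. nra. }
  induction j as [|j IH].
  - simpl. nra.
  - rewrite S_INR. rewrite S_INR in IH.
    set (J := INR (S (S j))) in *.
    assert (HJ : 2 <= J). { unfold J. rewrite !S_INR. pose proof (pos_INR j). lra. }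
    pose proof (step_ineq J (p + J) HJ ltac:(lra)).
    replace (p + (J + 1)) with (p + J + 1) by ring.
    assert (IH' : J * (p + J) ^ 2 <= 3 / 2 * (2 ^ S (S j) - 1) * p ^ 2) by (apply IH; lia).
    change (2 ^ S (S (S j))) with (2 * 2 ^ S (S j)).
    assert (0 <= p ^ 2) by nra.
    nra.
Qed.

Lemma pow_cube (n : nat) : (10 <= n)%nat -> INR n ^ 3 <= 2 ^ n.
Proof.
  intros H. induction H.
  - simpl. lra.
  - rewrite S_INR. simpl pow. simpl pow in IHle.
    assert (10 <= INR m) by (apply le_INR in H; simpl in H; lra).
    nra.
Qed.

Lemma le_div a b c : 0 < c -> a * c <= b -> a <= b / c.
Proof. intros. apply Rmult_le_reg_r with c. lra. replace (b / c * c) with b by (field; lra). lra. Qed.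

Lemma core U2 T S d1 d3 e2 A B w :
  0 < U2 -> 2 <= T -> 2 <= S -> 0 <= d1 <= 1/1000 -> 0 <= d3 <= 1/1000 -> 0 < w ->
  0 <= e2 <= w / 50 -> 0 <= A <= 3/2 * (T - 1) * w ->
  195/100 * (1 - (1 - d3) / S) * w <= B ->
  (U2 - U2 / S * (1 - d3)) * (A + e2) < (T * U2 * (1 - d1) - U2) * (B - e2).
Proof.
  intros HU HT HS Hd1 Hd3 Hw He HA HB.
  set (F := 1 - (1 - d3) / S) in *.
  assert (HF1 : F <= 1). { unfold F. assert (0 <= (1 - d3) / S) by (unfold Rdiv; apply Rmult_le_pos; [lra|left; apply Rinv_0_lt_compat; lra]). lra. }
  assert (HF2 : 1/2 <= F). { unfold F. assert ((1 - d3) / S <= 1/2).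
    { apply Rmult_le_reg_r with S. lra. unfold Rdiv. rewrite Rmult_assoc, Rinv_l by lra. lra. } lra. }
  replace (U2 - U2 / S * (1 - d3)) with (U2 * F) by (unfold F; field; lra).
  replace (T * U2 * (1 - d1) - U2) with (U2 * (T * (1 - d1) - 1)) by ring.
  rewrite !Rmult_assoc. apply Rmult_lt_compat_l; [lra|].
  assert (H1 : F * (A + e2) <= F * ((3/2 * T - 148/100) * w)).
  { apply Rmult_le_compat_l; lra. }
  assert (H2 : 191/100 * F * w <= B - e2) by nra.
  assert (H3 : 999/1000 * T - 1 <= T * (1 - d1)) by nra.
  assert (H4 : (999/1000 * T - 1) * (191/100 * F * w) <= (T * (1 - d1) - 1) * (B - e2)).
  { apply Rmult_le_compat; nra. }
  assert (F * ((3/2 * T - 148/100) * w) < (999/1000 * T - 1) * (191/100 * F * w)).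
  { assert (0 < F * w) by nra. 
    replace ((999/1000 * T - 1) * (191/100 * F * w)) with (((999/1000 * T - 1) * (191/100)) * (F * w)) by ring.
    replace (F * ((3/2 * T - 148/100) * w)) with ((3/2 * T - 148/100) * (F * w)) by ring.
    apply Rmult_lt_compat_r; lra. }
  lra.
Qed.

Lemma Bw (k : nat) q d3 : (1 <= k)%nat -> 200 <= q -> 0 <= d3 <= 1/1000 ->
  195/100 * (1 - (1 - d3) / 2 ^ k) <= q * INR k / (q + 2 * INR k).
Proof.
  intros Hk Hq Hd.
  destruct k as [|k]; [lia|]. destruct k as [|k].
  - simpl. replace (q * 1 / (q + 2 * 1)) with (q / (q + 2)) by (field; lra).
    replace (1 - (1 - d3) / (2 * 1)) with ((1 + d3) / 2) by field.
    assert (99/100 <= q / (q + 2)). { apply le_div; lra. }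
    lra.
  - assert (0 <= (1 - d3) / 2 ^ S (S k)).
    { unfold Rdiv; apply Rmult_le_pos; [lra|left; apply Rinv_0_lt_compat, pow_lt; lra]. }
    set (K := INR (S (S k))).
    assert (HK : 2 <= K). { unfold K. rewrite !S_INR. pose proof (pos_INR k). lra. }
    assert (195/100 <= q * K / (q + 2 * K)).
    { apply le_div; nra. }
    nra.
Qed.

Lemma U_small eps n : 0 < eps <= 1 -> (10 <= n)%nat -> 100 / eps <= INR n ->
  / 2 ^ n <= eps * GG eps n / INR n / 100.
Proof.
  intros He Hn HN.
  assert (Hn1 : (1 <= n)%nat) by lia.
  assert (Hp : 10 <= INR n) by (apply le_INR in Hn; simpl in Hn; lra).
  pose proof (GG_ge eps n ltac:(lra) Hn1).
  pose proof (pow_cube n Hn).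
  assert (Hen : 100 <= eps * INR n). { apply Rmult_le_reg_r with (/ eps).
    apply Rinv_0_lt_compat; lra. replace (eps * INR n * / eps) with (INR n) by (field; lra). exact HN. }
  apply Rle_trans with (/ (INR n ^ 3)).
  - apply Rinv_le_contravar. apply pow_lt; lra. lra.
  - assert (eps * / INR n / INR n / 100 <= eps * GG eps n / INR n / 100).
    { unfold Rdiv. apply Rmult_le_compat_r. lra. apply Rmult_le_compat_r.
      left; apply Rinv_0_lt_compat; lra. apply Rmult_le_compat_l; lra. }
    apply Rle_trans with (eps * / INR n / INR n / 100); [|exact H1].
    replace (eps * / INR n / INR n / 100) with ((eps * INR n) / 100 * / (INR n ^ 3)) by (field; lra).
    assert (0 < / INR n ^ 3) by (apply Rinv_0_lt_compat, pow_lt; lra).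
    assert (1 <= eps * INR n / 100) by lra. nra.
Qed.

Lemma delta_small eps c n : 0 < eps <= 1 -> 1000 / eps <= c -> (1 <= n)%nat ->
  GG eps n / (c * INR n) <= eps * GG eps n / INR n / 1000 /\
  0 <= GG eps n / (c * INR n) <= 1 / 1000.
Proof.
  intros He Hc Hn.
  assert (Hp : 1 <= INR n) by (apply le_INR in Hn; simpl in Hn; lra).
  assert (H1000 : 1000 <= eps * c). { apply Rmult_le_reg_r with (/ eps).
    apply Rinv_0_lt_compat; lra. replace (eps * c * / eps) with c by (field; lra). exact Hc. }
  assert (Hc0 : 0 < c) by nra.
  pose proof (GG_pos eps n). pose proof (GG_le1 eps n ltac:(lra) Hn).
  assert (Hic : / c <= eps / 1000). { apply Rmult_le_reg_r with (1000 * c). nra.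
    replace (/ c * (1000 * c)) with 1000 by (field; lra).
    replace (eps / 1000 * (1000 * c)) with (eps * c) by (field; lra). lra. }
  assert (E : GG eps n / (c * INR n) = (GG eps n / INR n) * / c) by (field; lra).
  assert (0 < GG eps n / INR n) by (apply Rdiv_lt_0_compat; lra).
  assert (GG eps n / INR n <= 1). { apply Rmult_le_reg_r with (INR n). lra.
    replace (GG eps n / INR n * INR n) with (GG eps n) by (field; lra). lra. }
  assert (0 < / c) by (apply Rinv_0_lt_compat; lra).
  rewrite E. split.
  - replace (eps * GG eps n / INR n / 1000) with ((GG eps n / INR n) * (eps / 1000)) by (field; lra).
    apply Rmult_le_compat_l; lra.
  - split. nra. assert (GG eps n / INR n * / c <= 1 * (eps / 1000)) by (apply Rmult_le_compat; lra). lra.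
Qed.

Theorem lemma3p2 (eps : R) (Heps : 0 < eps < 1) :
  exists c0 : R, forall c : R, c0 <= c ->
  exists n0 : nat, forall a b d : R, ~ (a = 0 /\ b = 0) ->
  forall n1 n2 n3 : nat, (n0 <= n1)%nat -> (n1 < n2)%nat -> (n2 < n3)%nat ->
    ~ (line_meets_Q a b d eps c n1 /\ line_meets_Q a b d eps c n2 /\
       line_meets_Q a b d eps c n3).
Proof.
  assert (He : 0 < eps <= 1) by lra.
  exists (1000 / eps). intros c Hc.
  assert (H1000 : 1000 <= eps * c). { apply Rmult_le_reg_r with (/ eps).
    apply Rinv_0_lt_compat; lra. replace (eps * c * / eps) with c by (field; lra).
    exact Hc. }
  assert (Hc1 : 1 <= c) by nra.
  destruct (INR_unbounded (100 / eps)) as [N0 HN0].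
  exists (N0 + 200)%nat.
  intros a b d Hab n1 n2 n3 Hn1 H12 H23
    [[x1 [y1 [E1 Q1]]] [[x2 [y2 [E2 Q2]]] [x3 [y3 [E3 Q3]]]]].
  assert (Hnn : forall n, (N0 + 200 <= n)%nat ->
     (1 <= n)%nat /\ (10 <= n)%nat /\ 200 <= INR n /\ 100 / eps <= INR n).
  { intros n Hn. repeat split; try lia.
    - apply le_INR in Hn. rewrite plus_INR in Hn. pose proof (pos_INR N0).
      replace (INR 200) with 200 in Hn by (simpl; lra). lra.
    - apply le_INR in Hn. rewrite plus_INR in Hn. pose proof (pos_INR N0).
      replace (INR 200) with 200 in Hn by (simpl; lra). lra. }
  destruct (Hnn n1 ltac:(lia)) as [h11 [h12 [h13 h14]]].
  destruct (Hnn n2 ltac:(lia)) as [h21 [h22 [h23 h24]]].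
  destruct (Hnn n3 ltac:(lia)) as [h31 [h32 [h33 h34]]].
  destruct (sq_bounds eps c n1 x1 y1 He Hc1 h11 Q1) as [Hx1 [[u1l u1u] [r1l r1u]]].
  destruct (sq_bounds eps c n2 x2 y2 He Hc1 h21 Q2) as [Hx2 [[u2l u2u] [r2l r2u]]].
  destruct (sq_bounds eps c n3 x3 y3 He Hc1 h31 Q3) as [Hx3 [[u3l u3u] [r3l r3u]]].
  destruct (delta_small eps c n1 He Hc h11) as [_ d1b].
  destruct (delta_small eps c n2 He Hc h21) as [d2w d2b].
  destruct (delta_small eps c n3 He Hc h31) as [_ d3b].
  pose proof (U_small eps n2 He h22 h24) as U2s.
  set (p := INR n1) in *. set (q := INR n2) in *. set (m := INR n3) in *.
  set (G1 := GG eps n1) in *. set (G2 := GG eps n2) in *. set (G3 := GG eps n3) in *.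
  set (d1 := G1 / (c * p)) in *. set (d2 := G2 / (c * q)) in *. set (d3 := G3 / (c * m)) in *.
  set (u1 := / x1) in *. set (u2 := / x2) in *. set (u3 := / x3) in *.
  set (r1 := y1 / x1) in *. set (r2 := y2 / x2) in *. set (r3 := y3 / x3) in *.
  destruct (Nat.le_exists_sub (S n1) n2 H12) as [j' [Ej' _]].
  destruct (Nat.le_exists_sub (S n2) n3 H23) as [k' [Ek' _]].
  set (j := S j'). set (k := S k').
  assert (Ej : n2 = (n1 + j)%nat) by (unfold j; lia).
  assert (Ek : n3 = (n2 + k)%nat) by (unfold k; lia).
  set (U2 := / 2 ^ n2) in *.
  set (T := 2 ^ j). set (S := 2 ^ k).
  assert (HT : 2 <= T). { unfold T, j. simpl.
    assert (1 <= 2 ^ j') by (apply pow_R1_Rle; lra). lra. }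
  assert (HS : 2 <= S). { unfold S, k. simpl.
    assert (1 <= 2 ^ k') by (apply pow_R1_Rle; lra). lra. }
  assert (HU2 : 0 < U2) by (apply Rinv_0_lt_compat, pow_lt; lra).
  assert (EU1 : / 2 ^ n1 = T * U2).
  { unfold U2, T. rewrite Ej, pow_add. field. split; apply pow_nonzero; lra. }
  assert (EU3 : / 2 ^ n3 = U2 / S).
  { unfold U2, S. rewrite Ek, pow_add. field. split; apply pow_nonzero; lra. }
  rewrite EU1 in u1l, u1u. rewrite EU3 in u3l, u3u.
  assert (Hp : 0 < p) by lra.
  assert (Hpq : p < q). { unfold p, q. apply lt_INR. lia. }
  assert (Hqm : q < m). { unfold q, m. apply lt_INR. lia. }
  assert (Hjq : INR j = q - p). { unfold q, p. rewrite Ej, plus_INR. ring. }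
  assert (Hkm : INR k = m - q). { unfold q, m. rewrite Ek, plus_INR. ring. }
  assert (EG1 : G1 = exp (- (eps * ln p))) by (unfold G1, p; apply GG_exp).
  assert (EG2 : G2 = exp (- (eps * ln q))) by (unfold G2, q; apply GG_exp).
  assert (EG3 : G3 = exp (- (eps * ln m))) by (unfold G3, m; apply GG_exp).
  set (w := eps * G2 / q).
  assert (HG2 : 0 < G2) by apply GG_pos.
  assert (Hw : 0 < w) by (unfold w; apply Rdiv_lt_0_compat; nra).
  assert (HA : G1 - G2 <= 3/2 * (T - 1) * w).
  { pose proof (A_bound eps p q He ltac:(lra)) as Hab'.
    rewrite <- EG1, <- EG2 in Hab'.
    eapply Rle_trans; [exact Hab'|].
    pose proof (key_j j p ltac:(unfold j; lia) ltac:(lra)) as Kj.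
    rewrite Hjq in Kj. replace (p + (q - p)) with q in Kj by ring.
    replace (eps * G2 * ((q - p) / p) * (q / p)) with (w * ((q - p) * q ^ 2 / p ^ 2))
      by (unfold w; field; lra).
    replace (3 / 2 * (T - 1) * w) with (w * (3 / 2 * (T - 1))) by ring.
    apply Rmult_le_compat_l. lra.
    unfold T. apply Rmult_le_reg_r with (p ^ 2). apply pow_lt; lra.
    replace ((q - p) * q ^ 2 / p ^ 2 * p ^ 2) with ((q - p) * q ^ 2) by (field; lra). lra. }
  assert (HA0 : 0 <= G1 - G2).
  { rewrite EG1, EG2. assert (ln p < ln q) by (apply ln_increasing; lra).
    assert (- (eps * ln q) <= - (eps * ln p)) by nra.
    pose proof (exp_le_mono _ _ H0). lra. }
  assert (HB : 195/100 * (1 - (1 - d3) / S) * w <= G2 - G3).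
  { pose proof (B_bound eps q m He ltac:(lra)) as Hbb.
    rewrite <- EG2, <- EG3 in Hbb.
    eapply Rle_trans; [|exact Hbb].
    pose proof (Bw k q d3 ltac:(unfold k; lia) h23 ltac:(lra)) as Hb.
    fold S in Hb. rewrite Hkm in Hb.
    replace (m + (m - q)) with (q + 2 * (m - q)) by ring.
    replace (G2 * (eps * (m - q) / (q + 2 * (m - q)))) with (w * (q * (m - q) / (q + 2 * (m - q))))
      by (unfold w; field; lra).
    replace (195 / 100 * (1 - (1 - d3) / S) * w) with (w * (195 / 100 * (1 - (1 - d3) / S))) by ring.
    apply Rmult_le_compat_l; lra. }
  set (e2 := 2 * d2 + U2) in *.
  assert (He2 : 0 <= e2 <= w / 50).
  { unfold e2. fold w in d2w. fold q in U2s. fold w in U2s. split; lra. }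
  pose proof (core U2 T S d1 d3 e2 (G1 - G2) (G2 - G3) w HU2 HT HS d1b d3b Hw He2
    ltac:(lra) HB) as Hcore.
  assert (C1 : a + b * r1 = d * u1) by (unfold r1, u1; rewrite <- E1; field; lra).
  assert (C2 : a + b * r2 = d * u2) by (unfold r2, u2; rewrite <- E2; field; lra).
  assert (C3 : a + b * r3 = d * u3) by (unfold r3, u3; rewrite <- E3; field; lra).
  assert (HSU : U2 / S <= U2 / 2).
  { unfold Rdiv. apply Rmult_le_compat_l. lra. apply Rinv_le_contravar; lra. }
  assert (HSU0 : 0 < U2 / S) by (apply Rdiv_lt_0_compat; lra).
  set (P1 := T * U2 * (1 - d1) - U2).
  assert (HP1 : 0 < P1). { unfold P1. assert (T * U2 * (1 - d1) >= 2 * U2 * (999/1000)).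
    { apply Rle_ge. apply Rmult_le_compat; nra. } lra. }
  assert (HP2 : 0 <= U2 - U2 / S * (1 - d3)). { assert (U2 / S * (1 - d3) <= U2 / S * 1)
    by (apply Rmult_le_compat_l; lra). lra. }
  assert (HQ1 : 0 < G2 - G3 - e2). 
  { assert (Hfs : (1 - d3) / S <= 1 / 2). { unfold Rdiv. 
      apply Rle_trans with ((1 - d3) * / 2). apply Rmult_le_compat_l. lra. apply Rinv_le_contravar; lra. lra. }
    nra. }
  assert (L1 : P1 <= u1 - u2) by (unfold P1; lra).
  assert (L2 : G2 - G3 - e2 <= r2 - r3) by lra.
  assert (L3 : 0 <= u2 - u3 <= U2 - U2 / S * (1 - d3)).
  { split; [|lra]. assert (U2 * (1 - d2) >= U2 * (999/1000)) by (apply Rle_ge, Rmult_le_compat_l; lra).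
    lra. }
  assert (L4 : r1 - r2 <= (G1 - G2) + e2) by lra.
  assert (M1 : P1 * (G2 - G3 - e2) <= (u1 - u2) * (r2 - r3)) by (apply Rmult_le_compat; lra).
  assert (M2 : (u2 - u3) * (r1 - r2) <= (U2 - U2 / S * (1 - d3)) * (G1 - G2 + e2)).
  { apply Rle_trans with ((u2 - u3) * (G1 - G2 + e2)).
    apply Rmult_le_compat_l; lra. apply Rmult_le_compat_r; lra. }
  replace (T * U2 * (1 - d1) - U2) with P1 in Hcore by reflexivity.
  replace (G2 - G3 - e2) with (G2 - G3 - e2) in M1 by reflexivity.
  set (D := (u1 - u2) * (r2 - r3) - (u2 - u3) * (r1 - r2)).
  assert (HD : 0 < D) by (unfold D; lra).
  assert (HbD : b * D = 0).
  { unfold D. replace (b * ((u1 - u2) * (r2 - r3) - (u2 - u3) * (r1 - r2))) with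
      ((u1 - u2) * (b * r2 - b * r3) - (u2 - u3) * (b * r1 - b * r2)) by ring.
    replace (b * r2 - b * r3) with (d * u2 - d * u3) by lra.
    replace (b * r1 - b * r2) with (d * u1 - d * u2) by lra. ring. }
  assert (Hb0 : b = 0).
  { destruct (Rmult_integral _ _ HbD) as [H|H]; [exact H| lra]. }
  subst b.
  assert (d * (u1 - u2) = 0) by lra.
  destruct (Rmult_integral _ _ H) as [Hd|Hd]; [|lra].
  rewrite Hd in C1. apply Hab. split; lra.
Qed.
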